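(* Let $f(a,b,c,d,e,x,y)$ be analytic in a neighbourhood of the origin of $\mathbb{C}^7$. Suppose that, with $F(X,Y)=f(a,b,c,d,e,X,Y)$, $f$ satisfies in a neighbourhood of the origin the equation $$x\Big\{F(x,y)-F(x,yq)-(d+e)q^{-1}\big[F(x,yq)-F(x,yq^2)\big]+de\,q^{-2}\big[F(x,yq^2)-F(x,yq^3)\big]\Big\}$$ $$=y\Big\{\big[F(x,y)-F(xq,y)\big]-(a+b+c)\big[F(x,yq)-F(xq,yq)\big]+(ab+ac+bc)\big[F(x,yq^2)-F(xq,yq^2)\big]-abc\big[F(x,yq^3)-F(xq,yq^3)\big]\Big\}.$$ Then, in some neighbourhood of the origin, $$f(a,b,c,d,e,x,y)=\mathbb{T}(a,b,c,d,e,yD_x)\{f(a,b,c,d,e,x,0)\}=\sum_{n\ge0}\frac{(a,b,c;q)_n}{(q,d,e;q)_n}\,y^n\,D_x^n\{f(a,b,c,d,e,x,0)\},$$ and the series converges there.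
   Context: Throughout, $0<q<1$. $(\alpha;q)_0=1$, $(\alpha;q)_n=\prod_{j=0}^{n-1}(1-\alpha q^j)$, and $(\alpha_1,\dots,\alpha_r;q)_n=\prod_i(\alpha_i;q)_n$. $D_x$ is the $q$-derivative acting on the variable $x$ with all other variables fixed: $D_x\{g(x)\}=\frac{g(x)-g(xq)}{x}$. For a function analytic at $0$, $D_x$ acts termwise on the power series, $D_x\{x^m\}=(1-q^m)x^{m-1}$, which gives the value at $x=0$ by continuity. The operator is $\mathbb{T}(a,b,c,d,e,yD_x)=\sum_{n\ge0}\frac{(a,b,c;q)_n}{(q,d,e;q)_n}(yD_x)^n$. *)

(* Defs.v *)
From Stdlib Require Import Reals ClassicalDescription ClassicalEpsilon.
From Coquelicot Require Import Coquelicot.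

Open Scope C_scope.

Fixpoint qpoch (q : R) (alpha : C) (n : nat) : C :=
  match n with
  | O => 1
  | S m => qpoch q alpha m * (1 - alpha * (RtoC q) ^ m)
  end.

Definition Tcoef (q : R) (a b c d e : C) (n : nat) : C :=
  (qpoch q a n * qpoch q b n * qpoch q c n)
  / (qpoch q (RtoC q) n * qpoch q d n * qpoch q e n).

(* Value of a limit (if it exists; 0 otherwise) of g(x) as x -> x0, x <> x0. *)
Definition climit (g : C -> C) (x0 : C) : C :=
  match excluded_middle_informative
          (exists l : C, filterlim g (locally' x0) (locally l)) with
  | left H => proj1_sig (constructive_indefinite_description _ H)
  | right _ => 0
  end.

(* q-derivative D g (x) = (g x - g (x q)) / x for x <> 0, extended to x = 0
   by continuity (its limit as x -> 0). *)
Definition Dq (q : R) (g : C -> C) (x : C) : C :=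
  match excluded_middle_informative (x = 0) with
  | left _ => climit (fun t => (g t - g (t * RtoC q)) / t) 0
  | right _ => (g x - g (x * RtoC q)) / x
  end.

Definition Dqn (q : R) (n : nat) (g : C -> C) : C -> C := Nat.iter n (Dq q) g.

(* Analyticity at the origin of C^7: a 7-variable power series with
   coefficients [cf], absolutely convergent on the closed polydisc of
   radius r > 0 (bounded cube partial sums of |c_k| r^|k|), which converges
   (cube partial sums) to f on the open polydisc of radius r. *)
Definition cube_sum7 (N : nat)
  (t : nat -> nat -> nat -> nat -> nat -> nat -> nat -> C) : C :=
  sum_n (fun k1 => sum_n (fun k2 => sum_n (fun k3 => sum_n (fun k4 =>
  sum_n (fun k5 => sum_n (fun k6 => sum_n (fun k7 =>
    t k1 k2 k3 k4 k5 k6 k7) N) N) N) N) N) N) N.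

Definition cube_sum7R (N : nat)
  (t : nat -> nat -> nat -> nat -> nat -> nat -> nat -> R) : R :=
  sum_n (fun k1 => sum_n (fun k2 => sum_n (fun k3 => sum_n (fun k4 =>
  sum_n (fun k5 => sum_n (fun k6 => sum_n (fun k7 =>
    t k1 k2 k3 k4 k5 k6 k7) N) N) N) N) N) N) N.

Definition analytic_at_origin7 (f : C -> C -> C -> C -> C -> C -> C -> C) : Prop :=
  exists (cf : nat -> nat -> nat -> nat -> nat -> nat -> nat -> C) (r M : R),
    (0 < r)%R /\
    (forall N : nat,
        (cube_sum7R N (fun k1 k2 k3 k4 k5 k6 k7 =>
           Cmod (cf k1 k2 k3 k4 k5 k6 k7) * r ^ (k1+k2+k3+k4+k5+k6+k7)) <= M)%R) /\
    (forall z1 z2 z3 z4 z5 z6 z7 : C,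
        (Cmod z1 < r)%R -> (Cmod z2 < r)%R -> (Cmod z3 < r)%R ->
        (Cmod z4 < r)%R -> (Cmod z5 < r)%R -> (Cmod z6 < r)%R ->
        (Cmod z7 < r)%R ->
        filterlim
          (fun N => cube_sum7 N (fun k1 k2 k3 k4 k5 k6 k7 =>
              cf k1 k2 k3 k4 k5 k6 k7 * z1 ^ k1 * z2 ^ k2 * z3 ^ k3 * z4 ^ k4
              * z5 ^ k5 * z6 ^ k6 * z7 ^ k7))
          eventually (locally (f z1 z2 z3 z4 z5 z6 z7))).

(* Main.v *)
Require Import Defs.
From Stdlib Require Import Reals ClassicalDescription Lra Lia.
From Coquelicot Require Import Coquelicot.
Open Scope C_scope.

Fixpoint nf (k : nat) (X : Type) : Type :=
  match k with O => X | S k => nat -> nf k X end.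

Fixpoint gcube (k N : nat) : nf k C -> C :=
  match k with O => fun t => t | S k => fun t => sum_n (fun i => gcube k N (t i)) N end.
Fixpoint gcubeR (k N : nat) : nf k R -> R :=
  match k with O => fun t => t | S k => fun t => sum_n (fun i => gcubeR k N (t i)) N end.

Lemma cube7_eq N t : cube_sum7 N t = gcube 7 N t.
Proof. reflexivity. Qed.
Lemma cube7R_eq N t : cube_sum7R N t = gcubeR 7 N t.
Proof. reflexivity. Qed.

Fixpoint slice {X} (k : nat) : nf (S k) X -> nat -> nf k X :=
  match k with O => fun t n => t n | S k => fun t n => fun i => slice k (t i) n end.

Lemma gcube_slice k N t : gcube (S k) N t = sum_n (fun n => gcube k N (slice k t n)) N.
Proof.
  induction k as [|k IH]; simpl; [reflexivity|].
  rewrite (sum_n_ext _ (fun i => sum_n (fun n => gcube k N (slice k (t i) n)) N)).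
  2:{ intros i. apply (IH (t i)). }
  apply sum_n_switch.
Qed.
Lemma gcubeR_slice k N t : gcubeR (S k) N t = sum_n (fun n => gcubeR k N (slice k t n)) N.
Proof.
  induction k as [|k IH]; simpl; [reflexivity|].
  rewrite (sum_n_ext _ (fun i => sum_n (fun n => gcubeR k N (slice k (t i) n)) N)).
  2:{ intros i. apply (IH (t i)). }
  apply sum_n_switch.
Qed.

Lemma sumC_S (a : nat -> C) n : sum_n a (S n) = sum_n a n + a (S n).
Proof. exact (sum_Sn a n). Qed.
Lemma sumC_O (a : nat -> C) : sum_n a 0%nat = a 0%nat.
Proof. exact (sum_O a). Qed.
Lemma sumR_S (a : nat -> R) n : sum_n a (S n) = (sum_n a n + a (S n))%R.
Proof. exact (sum_Sn a n). Qed.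
Lemma sumR_O (a : nat -> R) : sum_n a 0%nat = a 0%nat.
Proof. exact (sum_O a). Qed.

Lemma Cmod_sub_le x y : (Cmod (x - y) <= Cmod x + Cmod y)%R.
Proof. unfold Cminus. eapply Rle_trans; [apply Cmod_triangle|]. rewrite Cmod_opp; lra. Qed.

Lemma sum_bound (g : nat -> C) (G : nat -> R) N :
  (forall i, Cmod (g i) <= G i)%R -> (Cmod (sum_n g N) <= sum_n G N)%R.
Proof.
  intros H; induction N as [|N IH].
  - rewrite sumC_O, sumR_O; apply H.
  - rewrite sumC_S, sumR_S. eapply Rle_trans; [apply Cmod_triangle|].
    specialize (H (S N)); lra.
Qed.

Lemma sum_nonneg (G : nat -> R) N : (forall i, 0 <= G i)%R -> (0 <= sum_n G N)%R.
Proof.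
  intros H; induction N as [|N IH]; [rewrite sumR_O; apply H|].
  rewrite sumR_S; specialize (H (S N)); lra.
Qed.

Lemma sum_diff_bound (g g' : nat -> C) (G G' : nat -> R) N :
  (forall i, Cmod (g' i - g i) <= G' i - G i)%R ->
  (Cmod (sum_n g' N - sum_n g N) <= sum_n G' N - sum_n G N)%R.
Proof.
  intros H; induction N as [|N IH].
  - rewrite !sumC_O, !sumR_O; apply H.
  - rewrite !sumC_S, !sumR_S.
    replace (sum_n g' N + g' (S N) - (sum_n g N + g (S N)))
      with ((sum_n g' N - sum_n g N) + (g' (S N) - g (S N))) by ring.
    eapply Rle_trans; [apply Cmod_triangle|].
    specialize (H (S N)); lra.
Qed.

Lemma shell (g g' : nat -> C) (G G' : nat -> R) N d :
  (forall i, Cmod (g' i - g i) <= G' i - G i)%R ->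
  (forall i, Cmod (g' i) <= G' i)%R ->
  (Cmod (sum_n g' (N + d) - sum_n g N) <= sum_n G' (N + d) - sum_n G N)%R.
Proof.
  intros H1 H2; induction d as [|d IH].
  - rewrite Nat.add_0_r; apply sum_diff_bound; auto.
  - rewrite Nat.add_succ_r, sumC_S, sumR_S.
    replace (sum_n g' (N + d) + g' (S (N + d)) - sum_n g N)
      with ((sum_n g' (N + d) - sum_n g N) + g' (S (N + d))) by ring.
    eapply Rle_trans; [apply Cmod_triangle|].
    specialize (H2 (S (N + d))); lra.
Qed.

Fixpoint dom (k : nat) : nf k C -> nf k R -> Prop :=
  match k with O => fun t T => (Cmod t <= T)%R
  | S k => fun t T => forall i, dom k (t i) (T i) end.

Lemma dom_bound k N t T : dom k t T -> (Cmod (gcube k N t) <= gcubeR k N T)%R.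
Proof.
  revert t T; induction k as [|k IH]; simpl; intros t T H; [exact H|].
  apply sum_bound; intros i; apply IH, H.
Qed.

Lemma dom_shell k N d t T : dom k t T ->
  (Cmod (gcube k (N + d) t - gcube k N t) <= gcubeR k (N + d) T - gcubeR k N T)%R.
Proof.
  revert t T; induction k as [|k IH]; simpl; intros t T H.
  - replace (t - t) with (RtoC 0) by ring. rewrite Cmod_0; lra.
  - apply shell; intros i.
    + apply IH, H.
    + apply dom_bound, H.
Qed.

Fixpoint dom2 (k : nat) (c : R) : nf k C -> nf k C -> nf k R -> Prop :=
  match k with O => fun t s T => (Cmod (t - s) <= c * T)%R
  | S k => fun t s T => forall i, dom2 k c (t i) (s i) (T i) end.

Lemma sum_diff_c (g h : nat -> C) (G : nat -> R) c N :
  (forall i, Cmod (g i - h i) <= c * G i)%R ->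
  (Cmod (sum_n g N - sum_n h N) <= c * sum_n G N)%R.
Proof.
  intros H; induction N as [|N IH].
  - rewrite !sumC_O, !sumR_O; apply H.
  - rewrite !sumC_S, !sumR_S.
    replace (sum_n g N + g (S N) - (sum_n h N + h (S N)))
      with ((sum_n g N - sum_n h N) + (g (S N) - h (S N))) by ring.
    eapply Rle_trans; [apply Cmod_triangle|].
    specialize (H (S N)); nra.
Qed.

Lemma dom2_bound k c N t s T : dom2 k c t s T ->
  (Cmod (gcube k N t - gcube k N s) <= c * gcubeR k N T)%R.
Proof.
  revert t s T; induction k as [|k IH]; simpl; intros t s T H; [exact H|].
  apply sum_diff_c; intros i; apply IH, H.
Qed.

Lemma lim_eps {K : AbsRing} {V : NormedModule K} (s : nat -> V) l :
  filterlim s eventually (locally l) <->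
  (forall eps, (0 < eps)%R -> exists N0, forall N, (N0 <= N)%nat -> (norm (minus (s N) l) < eps)%R).
Proof.
  split.
  - intros H eps Heps.
    apply (H (ball_norm l (mkposreal eps Heps))).
    apply locally_le_locally_norm, locally_norm_ball_norm.
  - intros H P HP. apply locally_norm_le_locally in HP.
    destruct HP as [eps He]. destruct (H eps (cond_pos eps)) as [N0 HN].
    exists N0. intros N HN0. apply He. apply HN; auto.
Qed.

Lemma limC_eps (s : nat -> C) l :
  filterlim s eventually (locally l) <->
  (forall eps, (0 < eps)%R -> exists N0, forall N, (N0 <= N)%nat -> (Cmod (s N - l) < eps)%R).
Proof. exact (lim_eps s l). Qed.

Lemma limR_eps (s : nat -> R) l :
  filterlim s eventually (locally l) <->
  (forall eps, (0 < eps)%R -> exists N0, forall N, (N0 <= N)%nat -> (Rabs (s N - l) < eps)%R).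
Proof. exact (lim_eps s l). Qed.

Lemma lim_le (s : nat -> C) l B N0 :
  filterlim s eventually (locally l) ->
  (forall N, (N0 <= N)%nat -> Cmod (s N) <= B)%R -> (Cmod l <= B)%R.
Proof.
  intros H HB. apply Rnot_lt_le; intros Hc.
  destruct (proj1 (limC_eps s l) H (Cmod l - B)%R) as [N1 HN1]; [lra|].
  specialize (HN1 (max N0 N1) ltac:(lia)). specialize (HB (max N0 N1) ltac:(lia)).
  assert (Cmod l <= Cmod (s (max N0 N1)) + Cmod (s (max N0 N1) - l))%R.
  { replace l with (s (max N0 N1) - (s (max N0 N1) - l)) at 1 by ring.
    apply Cmod_sub_le. }
  lra.
Qed.

Lemma cauchy_lim (s : nat -> C) (S : nat -> R) B :
  (forall N d, Cmod (s (N + d)%nat - s N) <= S (N + d)%nat - S N)%R ->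
  (forall N, S N <= B)%R ->
  exists l, filterlim s eventually (locally l).
Proof.
  intros Hd HB.
  assert (Hinc : forall n, (S n <= S (Datatypes.S n))%R).
  { intros n. specialize (Hd n 1%nat). rewrite Nat.add_1_r in Hd.
    pose proof (Cmod_ge_0 (s (Datatypes.S n) - s n)). lra. }
  destruct (ex_finite_lim_seq_incr S B Hinc HB) as [L HL].
  apply (proj1 (filterlim_locally_cauchy (U:=CompleteNormedModule.CompleteSpace _ C_CompleteNormedModule) (F:=eventually) s)).
  intros eps.
  assert (HL' : filterlim S eventually (locally L)) by exact HL.
  destruct (proj1 (limR_eps S L) HL' (eps/2)%R) as [N0 HN0].
  { destruct eps; simpl; lra. }
  exists (fun n => (N0 <= n)%nat). split; [exists N0; auto|].
  intros u v Hu Hv. apply (norm_compat1 (V:=C_NormedModule)).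
  change (Cmod (s v - s u) < eps)%R.
  assert (Hsym : forall u v, (N0 <= u)%nat -> (u <= v)%nat -> (Cmod (s v - s u) < eps)%R).
  { intros u' v' Hu' Huv. replace v' with (u' + (v' - u'))%nat by lia.
    eapply Rle_lt_trans; [apply Hd|].
    replace (u' + (v' - u'))%nat with v' by lia.
    pose proof (HN0 u' Hu'). pose proof (HN0 v' ltac:(lia)).
    apply Rabs_def2 in H. apply Rabs_def2 in H0. lra. }
  destruct (Nat.le_ge_cases u v) as [Huv|Huv].
  - apply Hsym; auto.
  - replace (s v - s u) with (- (s u - s v)) by ring. rewrite Cmod_opp. apply Hsym; auto.
Qed.

Fixpoint amul (k : nat) : nf k C -> C -> nf k C :=
  match k with O => fun t c => t * c | S k => fun t c => fun i => amul k (t i) c end.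
Fixpoint amulR (k : nat) : nf k R -> R -> nf k R :=
  match k with O => fun t c => (t * c)%R | S k => fun t c => fun i => amulR k (t i) c end.

Lemma sumC_mult_r (g : nat -> C) c N : @eq C (sum_n (fun i => g i * c) N) (sum_n g N * c).
Proof. induction N; [rewrite !sumC_O; auto|rewrite !sumC_S, IHN; ring]. Qed.
Lemma sumR_mult_r (g : nat -> R) c N : @eq R (sum_n (fun i => g i * c)%R N) (sum_n g N * c)%R.
Proof. induction N; [rewrite !sumR_O; auto|rewrite !sumR_S, IHN; ring]. Qed.

Lemma gcube_amul k N t c : gcube k N (amul k t c) = gcube k N t * c.
Proof.
  revert t; induction k as [|k IH]; simpl; intros t; [reflexivity|].
  rewrite <- sumC_mult_r. apply sum_n_ext; intros i; apply IH.
Qed.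
Lemma gcubeR_amul k N t c : gcubeR k N (amulR k t c) = (gcubeR k N t * c)%R.
Proof.
  revert t; induction k as [|k IH]; simpl; intros t; [reflexivity|].
  rewrite <- sumR_mult_r. apply sum_n_ext; intros i; apply IH.
Qed.

Fixpoint leR (k : nat) : nf k R -> nf k R -> Prop :=
  match k with O => fun T T' => (T <= T')%R | S k => fun T T' => forall i, leR k (T i) (T' i) end.
Fixpoint nnR (k : nat) : nf k R -> Prop :=
  match k with O => fun T => (0 <= T)%R | S k => fun T => forall i, nnR k (T i) end.

Lemma sumR_le (g h : nat -> R) N : (forall i, g i <= h i)%R -> (sum_n g N <= sum_n h N)%R.
Proof. intros H; induction N; [rewrite !sumR_O; auto|rewrite !sumR_S; specialize (H (S N)); lra]. Qed.

Lemma sumR_ext_le (g : nat -> R) N d : (forall i, 0 <= g i)%R -> (sum_n g N <= sum_n g (N + d))%R.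
Proof.
  intros H; induction d; [rewrite Nat.add_0_r; lra|].
  rewrite Nat.add_succ_r, sumR_S. specialize (H (S (N + d))); lra.
Qed.

Lemma term_le_sum (g : nat -> R) n N : (forall i, 0 <= g i)%R -> (n <= N)%nat -> (g n <= sum_n g N)%R.
Proof.
  intros H Hn. induction Hn.
  - destruct n; [rewrite sumR_O; lra|]. rewrite sumR_S. pose proof (sum_nonneg g n H); lra.
  - rewrite sumR_S. specialize (H (S m)); lra.
Qed.

Lemma gcubeR_le k N T T' : leR k T T' -> (gcubeR k N T <= gcubeR k N T')%R.
Proof.
  revert T T'; induction k as [|k IH]; simpl; intros T T' H; [exact H|].
  apply sumR_le; intros i; apply IH, H.
Qed.

Lemma gcubeR_nn k N T : nnR k T -> (0 <= gcubeR k N T)%R.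
Proof.
  revert T; induction k as [|k IH]; simpl; intros T H; [exact H|].
  apply sum_nonneg; intros i; apply IH, H.
Qed.

Lemma gcubeR_mono k N d T : nnR k T -> (gcubeR k N T <= gcubeR k (N + d) T)%R.
Proof.
  revert T; induction k as [|k IH]; simpl; intros T H; [lra|].
  eapply Rle_trans.
  - apply (sumR_le _ (fun i => gcubeR k (N + d) (T i))). intros i; apply IH, H.
  - apply sumR_ext_le. intros i; apply gcubeR_nn, H.
Qed.

Definition Alim (s : nat -> C) : C :=
  match excluded_middle_informative (exists l : C, filterlim s eventually (locally l)) with
  | left H => proj1_sig (ClassicalEpsilon.constructive_indefinite_description _ H)
  | right _ => 0
  end.

Lemma Alim_spec s : (exists l : C, filterlim s eventually (locally l)) ->
  filterlim s eventually (locally (Alim s)).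
Proof.
  intros H. unfold Alim. destruct excluded_middle_informative as [H'|H']; [|contradiction].
  exact (proj2_sig (ClassicalEpsilon.constructive_indefinite_description _ H')).
Qed.

Definition Cf7 := nat -> nat -> nat -> nat -> nat -> nat -> nat -> C.

Definition u6 (cf : Cf7) (a b c d e x : C) (n : nat) : nf 6 C :=
  fun k1 k2 k3 k4 k5 k6 => cf k1 k2 k3 k4 k5 k6 n * a ^ k1 * b ^ k2 * c ^ k3 * d ^ k4 * e ^ k5 * x ^ k6.
Definition U6 (cf : Cf7) (r : R) (n : nat) : nf 6 R :=
  fun k1 k2 k3 k4 k5 k6 => (Cmod (cf k1 k2 k3 k4 k5 k6 n) * r ^ (k1+k2+k3+k4+k5+k6))%R.

Definition Acoef cf a b c d e x n := Alim (fun N => gcube 6 N (u6 cf a b c d e x n)).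

Lemma Cmod_pow_le z r k : (Cmod z <= r)%R -> (Cmod (z ^ k) <= r ^ k)%R.
Proof. intros H. rewrite Cmod_pow. apply pow_incr. split; [apply Cmod_ge_0|auto]. Qed.

Lemma mul_le a b a' b' : (0 <= a <= a')%R -> (0 <= b <= b')%R -> (a * b <= a' * b')%R.
Proof. intros; apply Rmult_le_compat; lra. Qed.

Lemma mul_le' a b a' b' : (0 <= a)%R -> (a <= a')%R -> (0 <= b)%R -> (b <= b')%R -> (a * b <= a' * b')%R.
Proof. intros; apply Rmult_le_compat; lra. Qed.

Lemma dom_u6 cf r a b c d e x n :
  (Cmod a <= r)%R -> (Cmod b <= r)%R -> (Cmod c <= r)%R -> (Cmod d <= r)%R ->
  (Cmod e <= r)%R -> (Cmod x <= r)%R -> dom 6 (u6 cf a b c d e x n) (U6 cf r n).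
Proof.
  intros Ha Hb Hc Hd He Hx. simpl. intros k1 k2 k3 k4 k5 k6. unfold u6, U6.
  rewrite !Cmod_mult, !pow_add.
  pose proof (Cmod_ge_0 (cf k1 k2 k3 k4 k5 k6 n)).
  pose proof (Cmod_pow_le a r k1 Ha). pose proof (Cmod_pow_le b r k2 Hb).
  pose proof (Cmod_pow_le c r k3 Hc). pose proof (Cmod_pow_le d r k4 Hd).
  pose proof (Cmod_pow_le e r k5 He). pose proof (Cmod_pow_le x r k6 Hx).
  pose proof (Cmod_ge_0 (a ^ k1)). pose proof (Cmod_ge_0 (b ^ k2)).
  pose proof (Cmod_ge_0 (c ^ k3)). pose proof (Cmod_ge_0 (d ^ k4)).
  pose proof (Cmod_ge_0 (e ^ k5)). pose proof (Cmod_ge_0 (x ^ k6)).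
  repeat rewrite <- Rmult_assoc.
  repeat (apply mul_le'; [repeat apply Rmult_le_pos; auto| |auto|auto]); lra.
Qed.

Definition W7 (cf : Cf7) (r : R) : nf 7 R :=
  fun k1 k2 k3 k4 k5 k6 k7 => (Cmod (cf k1 k2 k3 k4 k5 k6 k7) * r ^ (k1+k2+k3+k4+k5+k6+k7))%R.

Lemma Ubound cf r M : (0 < r)%R ->
  (forall N, cube_sum7R N (W7 cf r) <= M)%R ->
  forall N n, (gcubeR 6 N (U6 cf r n) * r ^ n <= M)%R.
Proof.
  intros Hr HB N n. specialize (HB (N + n)%nat).
  rewrite cube7R_eq, gcubeR_slice in HB.
  rewrite <- gcubeR_amul.
  assert (Hrn : (0 <= r ^ n)%R) by (apply pow_le; lra).
  eapply Rle_trans; [apply gcubeR_mono with (d := n)|].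
  { simpl; intros; unfold U6. apply Rmult_le_pos; [apply Rmult_le_pos; [apply Cmod_ge_0|apply pow_le; lra]|auto]. }
  eapply Rle_trans; [|exact HB].
  eapply Rle_trans; [|apply (term_le_sum (fun m => gcubeR 6 (N + n) (slice 6 (W7 cf r) m)) n); [|lia]].
  - apply gcubeR_le. simpl; intros. unfold U6, W7. rewrite (pow_add r _ n). lra.
  - intros i. apply gcubeR_nn. simpl; intros. unfold W7.
    apply Rmult_le_pos; [apply Cmod_ge_0|apply pow_le; lra].
Qed.

Lemma A_lim cf r M a b c d e x n : (0 < r)%R ->
  (forall N, cube_sum7R N (W7 cf r) <= M)%R ->
  (Cmod a <= r)%R -> (Cmod b <= r)%R -> (Cmod c <= r)%R -> (Cmod d <= r)%R ->
  (Cmod e <= r)%R -> (Cmod x <= r)%R ->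
  filterlim (fun N => gcube 6 N (u6 cf a b c d e x n)) eventually (locally (Acoef cf a b c d e x n))
  /\ (Cmod (Acoef cf a b c d e x n) * r ^ n <= M)%R.
Proof.
  intros Hr HB Ha Hb Hc Hd He Hx.
  pose proof (dom_u6 cf r a b c d e x n Ha Hb Hc Hd He Hx) as Hdom.
  assert (Hrn : (0 < r ^ n)%R) by (apply pow_lt; lra).
  assert (HS : forall N, (gcubeR 6 N (U6 cf r n) <= M / r ^ n)%R).
  { intros N. pose proof (Ubound cf r M Hr HB N n). apply Rle_div_r; auto. }
  assert (Hl : filterlim (fun N => gcube 6 N (u6 cf a b c d e x n)) eventually (locally (Acoef cf a b c d e x n))).
  { apply Alim_spec. apply (cauchy_lim _ (fun N => gcubeR 6 N (U6 cf r n)) (M / r ^ n)).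
    - intros N d'. apply dom_shell; auto.
    - auto. }
  split; auto.
  apply Rle_div_r; auto. apply (lim_le _ _ _ 0 Hl). intros N _.
  eapply Rle_trans; [apply dom_bound; eauto|]. apply HS.
Qed.

Lemma limC_plus (f g : nat -> C) lf lg :
  filterlim f eventually (locally lf) -> filterlim g eventually (locally lg) ->
  filterlim (fun N => f N + g N) eventually (locally (lf + lg)).
Proof.
  rewrite !limC_eps. intros Hf Hg eps Heps.
  destruct (Hf (eps/2)%R) as [N1 H1]; [lra|]. destruct (Hg (eps/2)%R) as [N2 H2]; [lra|].
  exists (max N1 N2). intros N HN.
  replace (f N + g N - (lf + lg)) with ((f N - lf) + (g N - lg)) by ring.
  eapply Rle_lt_trans; [apply Cmod_triangle|].
  specialize (H1 N ltac:(lia)); specialize (H2 N ltac:(lia)); lra.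
Qed.

Lemma limC_mulc (f : nat -> C) lf c :
  filterlim f eventually (locally lf) ->
  filterlim (fun N => f N * c) eventually (locally (lf * c)).
Proof.
  rewrite !limC_eps. intros Hf eps Heps.
  pose proof (Cmod_ge_0 c).
  destruct (Hf (eps / (Cmod c + 1))%R) as [N1 H1].
  { apply Rdiv_lt_0_compat; lra. }
  exists N1. intros N HN. specialize (H1 N HN).
  replace (f N * c - lf * c) with ((f N - lf) * c) by ring. rewrite Cmod_mult.
  apply Rlt_div_r in H1; [|lra].
  pose proof (Cmod_ge_0 (f N - lf)). nra.
Qed.

Lemma limC_opp (f : nat -> C) lf :
  filterlim f eventually (locally lf) -> filterlim (fun N => - f N) eventually (locally (- lf)).
Proof.
  rewrite !limC_eps. intros Hf eps Heps. destruct (Hf eps Heps) as [N1 H1].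
  exists N1. intros N HN. replace (- f N - - lf) with (- (f N - lf)) by ring.
  rewrite Cmod_opp; auto.
Qed.

Lemma limC_minus (f g : nat -> C) lf lg :
  filterlim f eventually (locally lf) -> filterlim g eventually (locally lg) ->
  filterlim (fun N => f N - g N) eventually (locally (lf - lg)).
Proof. intros; apply limC_plus; auto. apply limC_opp; auto. Qed.

Lemma limC_const (c : C) : filterlim (fun _ : nat => c) eventually (locally c).
Proof. rewrite limC_eps. intros eps H; exists 0%nat; intros. replace (c - c) with (RtoC 0) by ring. rewrite Cmod_0; auto. Qed.

Lemma limC_sum (h : nat -> nat -> C) (l : nat -> C) L :
  (forall n, filterlim (fun N => h N n) eventually (locally (l n))) ->
  filterlim (fun N => sum_n (h N) L) eventually (locally (sum_n l L)).
Proof.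
  intros H. induction L as [|L IH].
  - rewrite sumC_O. eapply filterlim_ext; [|apply (H 0%nat)]. intros N; simpl. rewrite sumC_O; auto.
  - rewrite sumC_S. eapply filterlim_ext; [|apply limC_plus; [apply IH|apply (H (S L))]].
    intros N; simpl. rewrite sumC_S; auto.
Qed.

Lemma geom_tail (g : nat -> C) M th : (0 <= th < 1)%R -> (0 <= M)%R ->
  (forall n, Cmod (g n) <= M * th ^ n)%R ->
  forall L d, (Cmod (sum_n g (L + d) - sum_n g L) <= M * th ^ (S L) / (1 - th))%R.
Proof.
  intros Hth HM Hg L d.
  assert (Hs : (Cmod (sum_n g (L + d) - sum_n g L) <= M * th ^ (S L) * (1 - th ^ d) / (1 - th))%R).
  { induction d as [|d IH].
    - rewrite Nat.add_0_r. replace (sum_n g L - sum_n g L) with (RtoC 0) by ring.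
      rewrite Cmod_0. simpl. unfold Rdiv. rewrite Rminus_diag, Rmult_0_r, Rmult_0_l. lra.
    - rewrite Nat.add_succ_r, sumC_S.
      replace (sum_n g (L + d) + g (S (L + d)) - sum_n g L) with
        ((sum_n g (L + d) - sum_n g L) + g (S (L + d))) by ring.
      eapply Rle_trans; [apply Cmod_triangle|].
      eapply Rle_trans; [apply Rplus_le_compat; [apply IH|apply Hg]|].
      right. replace (S (L + d)) with (S L + d)%nat by lia. rewrite pow_add. simpl pow. field. lra. }
  eapply Rle_trans; [exact Hs|].
  unfold Rdiv. apply Rmult_le_compat_r; [apply Rlt_le, Rinv_0_lt_compat; lra|].
  assert (0 <= th ^ d)%R by (apply pow_le; lra).
  assert (0 <= M * th ^ S L)%R by (apply Rmult_le_pos; [lra|apply pow_le; lra]).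
  nra.
Qed.

Definition HCprop (cf : Cf7) (r : R) (f : C -> C -> C -> C -> C -> C -> C -> C) :=
  forall z1 z2 z3 z4 z5 z6 z7 : C,
        (Cmod z1 < r)%R -> (Cmod z2 < r)%R -> (Cmod z3 < r)%R ->
        (Cmod z4 < r)%R -> (Cmod z5 < r)%R -> (Cmod z6 < r)%R ->
        (Cmod z7 < r)%R ->
        filterlim
          (fun N => cube_sum7 N (fun k1 k2 k3 k4 k5 k6 k7 =>
              cf k1 k2 k3 k4 k5 k6 k7 * z1 ^ k1 * z2 ^ k2 * z3 ^ k3 * z4 ^ k4
              * z5 ^ k5 * z6 ^ k6 * z7 ^ k7))
          eventually (locally (f z1 z2 z3 z4 z5 z6 z7)).

Lemma expansion cf r M f : (0 < r)%R ->
  (forall N, cube_sum7R N (W7 cf r) <= M)%R -> HCprop cf r f ->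
  forall a b c d e x y,
  (Cmod a < r)%R -> (Cmod b < r)%R -> (Cmod c < r)%R -> (Cmod d < r)%R ->
  (Cmod e < r)%R -> (Cmod x < r)%R -> (Cmod y < r)%R ->
  filterlim (fun L => sum_n (fun n => Acoef cf a b c d e x n * y ^ n) L) eventually
    (locally (f a b c d e x y)).
Proof.
  intros Hr HB HC a b c d e x y Ha Hb Hc Hd He Hx Hy.
  pose proof (HC a b c d e x y Ha Hb Hc Hd He Hx Hy) as H7.
  set (s := fun N n => gcube 6 N (u6 cf a b c d e x n) * y ^ n).
  assert (Hcs : forall N, cube_sum7 N (fun k1 k2 k3 k4 k5 k6 k7 =>
              cf k1 k2 k3 k4 k5 k6 k7 * a ^ k1 * b ^ k2 * c ^ k3 * d ^ k4
              * e ^ k5 * x ^ k6 * y ^ k7) = sum_n (s N) N).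
  { intros N. rewrite cube7_eq, gcube_slice. apply sum_n_ext; intros n.
    unfold s. rewrite <- gcube_amul. reflexivity. }
  assert (H7' : filterlim (fun N => sum_n (s N) N) eventually (locally (f a b c d e x y))).
  { eapply filterlim_ext; [|exact H7]. intros N; simpl. apply Hcs. }
  clear H7 Hcs.
  set (th := (Cmod y / r)%R).
  assert (Hth : (0 <= th < 1)%R).
  { unfold th. split; [apply Rdiv_le_0_compat; [apply Cmod_ge_0|lra]|].
    apply (proj1 (Rdiv_lt_1 _ _ Hr)); lra. }
  assert (Hlim : forall n, filterlim (fun N => gcube 6 N (u6 cf a b c d e x n)) eventually
                  (locally (Acoef cf a b c d e x n)) /\ (Cmod (Acoef cf a b c d e x n) * r ^ n <= M)%R).
  { intros n. apply A_lim; try lra; auto. }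
  assert (HM : (0 <= M)%R).
  { destruct (Hlim 0%nat) as [_ H0]. pose proof (Cmod_ge_0 (Acoef cf a b c d e x 0)). simpl in H0. lra. }
  assert (Hthn : forall n (z : C), (Cmod z * r ^ n <= M)%R -> (Cmod (z * y ^ n) <= M * th ^ n)%R).
  { intros n z Hz. rewrite Cmod_mult, Cmod_pow. unfold th.
    unfold Rdiv. rewrite Rpow_mult_distr, pow_inv.
    assert (0 < r ^ n)%R by (apply pow_lt; lra).
    assert (0 <= Cmod y ^ n)%R by (apply pow_le; apply Cmod_ge_0).
    apply Rle_div_r in Hz; auto. unfold Rdiv in Hz.
    replace (M * (Cmod y ^ n * / r ^ n))%R with (M * / r ^ n * Cmod y ^ n)%R by ring.
    apply Rmult_le_compat_r; auto. }
  assert (Hsb : forall N n, (Cmod (s N n) <= M * th ^ n)%R).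
  { intros N n. apply Hthn. pose proof (dom_u6 cf r a b c d e x n) as Hdm.
    pose proof (Ubound cf r M Hr HB N n).
    eapply Rle_trans; [|eauto]. apply Rmult_le_compat_r; [apply pow_le; lra|].
    apply dom_bound, Hdm; lra. }
  assert (Hab : forall n, (Cmod (Acoef cf a b c d e x n * y ^ n) <= M * th ^ n)%R).
  { intros n. apply Hthn. apply (Hlim n). }
  assert (HL : forall L, (Cmod (f a b c d e x y - sum_n (fun n => Acoef cf a b c d e x n * y ^ n) L)%C
                 <= M * th ^ (S L) / (1 - th))%R).
  { intros L.
    assert (HP : filterlim (fun N => sum_n (s N) N - sum_n (s N) L) eventually
              (locally (f a b c d e x y - sum_n (fun n => Acoef cf a b c d e x n * y ^ n) L))).
    { apply limC_minus; auto. apply (limC_sum s (fun n => Acoef cf a b c d e x n * y ^ n)).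
      intros n. unfold s. apply limC_mulc, Hlim. }
    apply (lim_le _ _ _ L HP). intros N HN.
    replace N with (L + (N - L))%nat by lia.
    apply geom_tail; auto. }
  apply limC_eps. intros eps Heps.
  destruct (pow_lt_1_zero th ltac:(rewrite Rabs_pos_eq; lra) (eps * (1 - th) / (M + 1))%R) as [L0 HL0].
  { apply Rdiv_lt_0_compat; [apply Rmult_lt_0_compat|]; lra. }
  exists L0. intros L HLL. specialize (HL L). specialize (HL0 (S L) ltac:(lia)).
  rewrite Rabs_pos_eq in HL0 by (apply pow_le; lra).
  replace (sum_n (fun n : nat => Acoef cf a b c d e x n * y ^ n) L - f a b c d e x y)
    with (- (f a b c d e x y - sum_n (fun n : nat => Acoef cf a b c d e x n * y ^ n) L)) by ring.
  rewrite Cmod_opp. eapply Rle_lt_trans; [exact HL|].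
  apply Rlt_div_l; [lra|].
  apply Rlt_div_r in HL0; [|lra].
  assert (0 <= th ^ S L)%R by (apply pow_le; lra).
  nra.
Qed.

Lemma w5_bound (z : C) r a b c d e k1 k2 k3 k4 k5 :
  (Cmod a <= r)%R -> (Cmod b <= r)%R -> (Cmod c <= r)%R -> (Cmod d <= r)%R ->
  (Cmod e <= r)%R ->
  (Cmod (z * a ^ k1 * b ^ k2 * c ^ k3 * d ^ k4 * e ^ k5) <= Cmod z * r ^ (k1+k2+k3+k4+k5))%R.
Proof.
  intros Ha Hb Hc Hd He.
  rewrite !Cmod_mult, !pow_add.
  pose proof (Cmod_ge_0 z).
  pose proof (Cmod_pow_le a r k1 Ha). pose proof (Cmod_pow_le b r k2 Hb).
  pose proof (Cmod_pow_le c r k3 Hc). pose proof (Cmod_pow_le d r k4 Hd).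
  pose proof (Cmod_pow_le e r k5 He).
  pose proof (Cmod_ge_0 (a ^ k1)). pose proof (Cmod_ge_0 (b ^ k2)).
  pose proof (Cmod_ge_0 (c ^ k3)). pose proof (Cmod_ge_0 (d ^ k4)).
  pose proof (Cmod_ge_0 (e ^ k5)).
  repeat rewrite <- Rmult_assoc.
  repeat (apply mul_le'; [repeat apply Rmult_le_pos; auto| |auto|auto]); lra.
Qed.

Lemma dom2_u6 cf r a b c d e x n : (0 < r)%R ->
  (Cmod a <= r)%R -> (Cmod b <= r)%R -> (Cmod c <= r)%R -> (Cmod d <= r)%R ->
  (Cmod e <= r)%R -> (Cmod x <= r)%R ->
  dom2 6 (Cmod x / r) (u6 cf a b c d e x n) (u6 cf a b c d e 0 n) (U6 cf r n).
Proof.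
  intros Hr Ha Hb Hc Hd He Hx. simpl. intros k1 k2 k3 k4 k5 k6. unfold u6, U6.
  pose proof (w5_bound (cf k1 k2 k3 k4 k5 k6 n) r a b c d e k1 k2 k3 k4 k5 Ha Hb Hc Hd He) as Hw.
  set (w := cf k1 k2 k3 k4 k5 k6 n * a ^ k1 * b ^ k2 * c ^ k3 * d ^ k4 * e ^ k5) in *.
  assert (Hc0 : (0 <= Cmod x / r)%R) by (apply Rdiv_le_0_compat; [apply Cmod_ge_0|lra]).
  assert (HU : (0 <= Cmod (cf k1 k2 k3 k4 k5 k6 n) * r ^ (k1 + k2 + k3 + k4 + k5 + k6))%R).
  { apply Rmult_le_pos; [apply Cmod_ge_0|apply pow_le; lra]. }
  destruct k6 as [|k].
  - replace (w * x ^ 0 - w * 0 ^ 0) with (RtoC 0) by (simpl; ring). rewrite Cmod_0.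
    apply Rmult_le_pos; auto.
  - replace (w * x ^ S k - w * 0 ^ S k) with (w * x * x ^ k) by (simpl; ring).
    rewrite !Cmod_mult. rewrite pow_add. simpl pow.
    pose proof (Cmod_pow_le x r k Hx). pose proof (Cmod_ge_0 (x ^ k)). pose proof (Cmod_ge_0 w).
    pose proof (Cmod_ge_0 x).
    set (P := (r ^ (k1 + k2 + k3 + k4 + k5))%R) in *.
    set (Z := Cmod (cf k1 k2 k3 k4 k5 (S k) n)) in *.
    assert (0 <= P)%R by (apply pow_le; lra).
    replace (Cmod x / r * (Z * (P * (r * r ^ k))))%R with (Z * P * Cmod x * r ^ k)%R by (field; lra).
    apply mul_le'; auto; [apply Rmult_le_pos; auto|].
    apply mul_le'; auto; lra.
Qed.

Lemma A_cont cf r M a b c d e x n : (0 < r)%R ->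
  (forall N, cube_sum7R N (W7 cf r) <= M)%R ->
  (Cmod a <= r)%R -> (Cmod b <= r)%R -> (Cmod c <= r)%R -> (Cmod d <= r)%R ->
  (Cmod e <= r)%R -> (Cmod x <= r)%R ->
  (Cmod (Acoef cf a b c d e x n - Acoef cf a b c d e 0 n) <= Cmod x / r * (M / r ^ n))%R.
Proof.
  intros Hr HB Ha Hb Hc Hd He Hx.
  assert (H0 : (Cmod 0 <= r)%R) by (rewrite Cmod_0; lra).
  destruct (A_lim cf r M a b c d e x n Hr HB Ha Hb Hc Hd He Hx) as [Hl1 _].
  destruct (A_lim cf r M a b c d e 0 n Hr HB Ha Hb Hc Hd He H0) as [Hl2 _].
  apply (lim_le _ _ _ 0 (limC_minus _ _ _ _ Hl1 Hl2)). intros N _.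
  pose proof (dom2_u6 cf r a b c d e x n Hr Ha Hb Hc Hd He Hx) as Hd2.
  eapply Rle_trans; [apply (dom2_bound _ _ N _ _ _ Hd2)|].
  apply Rmult_le_compat_l; [apply Rdiv_le_0_compat; [apply Cmod_ge_0|lra]|].
  assert (Hrn : (0 < r ^ n)%R) by (apply pow_lt; lra).
  apply Rle_div_r; auto. apply Ubound; auto.
Qed.
Lemma dbg : True. Proof. exact I. Qed.

Definition isC (a : nat -> C) (l : C) := filterlim (fun L => sum_n a L) eventually (locally l).

Lemma sumC_plus (a b : nat -> C) L : @eq C (sum_n (fun n => a n + b n) L) (sum_n a L + sum_n b L).
Proof. induction L; [rewrite !sumC_O; auto|rewrite !sumC_S, IHL; ring]. Qed.
Lemma sumC_minus (a b : nat -> C) L : @eq C (sum_n (fun n => a n - b n) L) (sum_n a L - sum_n b L).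
Proof. induction L; [rewrite !sumC_O; auto|rewrite !sumC_S, IHL; ring]. Qed.
Lemma sumC_scal (a : nat -> C) c L : @eq C (sum_n (fun n => c * a n) L) (c * sum_n a L).
Proof. induction L; [rewrite !sumC_O; auto|rewrite !sumC_S, IHL; ring]. Qed.

Lemma isC_plus a b la lb : isC a la -> isC b lb -> isC (fun n => a n + b n) (la + lb).
Proof.
  unfold isC; intros H1 H2. eapply filterlim_ext; [|apply limC_plus; eauto].
  intros L; simpl. rewrite sumC_plus; auto.
Qed.
Lemma isC_minus a b la lb : isC a la -> isC b lb -> isC (fun n => a n - b n) (la - lb).
Proof.
  unfold isC; intros H1 H2. eapply filterlim_ext; [|apply limC_minus; eauto].
  intros L; simpl. rewrite sumC_minus; auto.
Qed.
Lemma isC_scal a la c : isC a la -> isC (fun n => c * a n) (c * la).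
Proof.
  unfold isC; intros H1. apply (limC_mulc _ _ c) in H1. rewrite Cmult_comm.
  eapply filterlim_ext; [|exact H1].
  intros L; simpl. rewrite sumC_scal; ring.
Qed.
Lemma isC_ext a b l : (forall n, a n = b n) -> isC a l -> isC b l.
Proof.
  unfold isC; intros H1 H2. eapply filterlim_ext; [|exact H2].
  intros L; simpl. apply sum_n_ext; auto.
Qed.
Lemma isC_eq a l l' : l = l' -> isC a l -> isC a l'.
Proof. intros ->; auto. Qed.

Definition shift (g : nat -> C) (n : nat) : C := match n with O => 0 | S m => g m end.

Lemma isC_shift g l : isC g l -> isC (shift g) l.
Proof.
  unfold isC. rewrite !limC_eps. intros H eps Heps.
  destruct (H eps Heps) as [N0 HN]. exists (S N0). intros N HN0.
  destruct N as [|N]; [lia|].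
  assert (E : forall L, @eq C (sum_n (shift g) (S L)) (sum_n g L)).
  { induction L; [rewrite sumC_S, !sumC_O; simpl; ring|]. rewrite sumC_S, IHL, sumC_S. reflexivity. }
  rewrite E. apply HN. lia.
Qed.

Lemma sum_zero_prefix (g : nat -> C) L : (forall m, (m <= L)%nat -> g m = 0) -> @eq C (sum_n g L) 0.
Proof.
  intros H; induction L; [rewrite sumC_O; apply H; lia|].
  rewrite sumC_S, IHL, (H (S L)); [ring|lia|]. intros; apply H; lia.
Qed.

Lemma sum_last_only (g : nat -> C) n : (forall m, (m < n)%nat -> g m = 0) -> @eq C (sum_n g n) (g n).
Proof.
  intros H. destruct n; [apply sumC_O|]. rewrite sumC_S, sum_zero_prefix; [ring|].
  intros; apply H; lia.
Qed.

Lemma coef_unique (e : nat -> C) K R0 R1 : (0 < R0)%R -> (0 < R1)%R ->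
  (forall n, Cmod (e n) * R0 ^ n <= K)%R ->
  (forall y, (Cmod y < R1)%R -> isC (fun n => e n * y ^ n) 0) ->
  forall n, e n = 0.
Proof.
  intros HR0 HR1 HK Hs.
  assert (HK0 : (0 <= K)%R).
  { specialize (HK 0%nat). pose proof (Cmod_ge_0 (e 0%nat)). simpl in HK. lra. }
  intros n. induction n as [n IH] using (well_founded_induction Wf_nat.lt_wf).
  destruct (Ceq_dec (e n) 0) as [Hz|Hnz]; auto. exfalso.
  set (E := Cmod (e n)).
  assert (HE : (0 < E)%R) by (apply Cmod_gt_0; auto).
  assert (HP : (0 < R0 ^ n)%R) by (apply pow_lt; lra).
  set (s := Rmin (Rmin (R0 / 2) (R1 / 2)) (E * R0 ^ n * R0 / (4 * K + 4))).
  assert (Hs0 : (0 < s)%R).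
  { unfold s. repeat apply Rmin_pos; try lra. apply Rdiv_lt_0_compat; [|lra].
    repeat apply Rmult_lt_0_compat; lra. }
  assert (Hs1 : (s <= R0 / 2)%R) by (unfold s; eapply Rle_trans; apply Rmin_l).
  assert (Hs2 : (s <= R1 / 2)%R) by (unfold s; eapply Rle_trans; [apply Rmin_l|apply Rmin_r]).
  assert (Hs3 : (s <= E * R0 ^ n * R0 / (4 * K + 4))%R) by (unfold s; apply Rmin_r).
  set (th := (s / R0)%R).
  assert (Hth : (0 <= th <= 1/2)%R).
  { unfold th. split; [apply Rdiv_le_0_compat; lra|]. apply Rle_div_l; lra. }
  set (y := RtoC s).
  assert (Hy : Cmod y = s) by (unfold y; rewrite Cmod_R, Rabs_pos_eq; lra).
  specialize (Hs y ltac:(rewrite Hy; lra)).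
  set (g := fun m => e m * y ^ m).
  assert (Hthn : forall m, (s ^ m = th ^ m * R0 ^ m)%R).
  { intros m. unfold th. rewrite <- Rpow_mult_distr. f_equal. field. lra. }
  assert (Hg : forall m, (Cmod (g m) <= K * th ^ m)%R).
  { intros m. unfold g. rewrite Cmod_mult, Cmod_pow, Hy, Hthn.
    specialize (HK m). assert (0 <= th ^ m)%R by (apply pow_le; lra).
    apply Rle_trans with (Cmod (e m) * R0 ^ m * th ^ m)%R; [right; ring| apply Rmult_le_compat_r; auto]. }
  assert (Hlim : filterlim (fun L => sum_n g L - g n) eventually (locally (0 - g n))).
  { apply limC_minus; [exact Hs|apply limC_const]. }
  assert (Hb : (Cmod (0 - g n) <= K * th ^ S n / (1 - th))%R).
  { apply (lim_le _ _ _ n Hlim). intros L HL.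
    replace L with (n + (L - n))%nat by lia.
    rewrite <- (sum_last_only g n).
    - apply geom_tail; auto. lra.
    - intros m Hm. unfold g. rewrite (IH m Hm). ring. }
  replace (0 - g n) with (- g n) in Hb by ring. rewrite Cmod_opp in Hb.
  unfold g in Hb. rewrite Cmod_mult, Cmod_pow, Hy, Hthn in Hb. fold E in Hb.
  simpl pow in Hb.
  assert (Hthp : (0 < th)%R) by (unfold th; apply Rdiv_lt_0_compat; lra).
  assert (Htn : (0 < th ^ n)%R) by (apply pow_lt; lra).
  assert (Hb2 : (E * (th ^ n * R0 ^ n) <= 2 * K * (th * th ^ n))%R).
  { eapply Rle_trans; [exact Hb|]. apply Rle_div_l; [lra|].
    assert (0 <= K * (th * th ^ n))%R by (apply Rmult_le_pos; [lra|apply Rmult_le_pos; lra]).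
    nra. }
  assert (Hb3 : (E * R0 ^ n <= 2 * K * th)%R).
  { apply (Rmult_le_reg_r (th ^ n)); auto. nra. }
  assert (Hth2 : (th <= E * R0 ^ n / (4 * K + 4))%R).
  { unfold th. apply Rle_div_l; [lra|]. eapply Rle_trans; [exact Hs3|]. right. field. lra. }
  assert (Hth3 : (th * (4 * K + 4) <= E * R0 ^ n)%R) by (apply Rle_div_r in Hth2; lra).
  assert (0 < E * R0 ^ n)%R by (apply Rmult_lt_0_compat; lra).
  nra.
Qed.

Lemma climit_eq g z l : filterlim g (locally' z) (locally l) -> climit g z = l.
Proof.
  intros H. unfold climit. destruct (ClassicalEpsilon.excluded_middle_informative _) as [H'|H'].
  - pose proof (proj2_sig (ClassicalEpsilon.constructive_indefinite_description _ H')) as H2.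
    simpl in H2. apply is_C_lim_unique in H2. apply is_C_lim_unique in H. congruence.
  - exfalso; apply H'; eauto.
Qed.

Lemma limf_eps (g : C -> C) z l :
  (forall eps, (0 < eps)%R -> exists del, (0 < del)%R /\
     forall s, (Cmod (s - z) < del)%R -> s <> z -> (Cmod (g s - l) < eps)%R) ->
  filterlim g (locally' z) (locally l).
Proof.
  intros H P HP. pose proof (locally_norm_le_locally (V:=C_NormedModule) l P HP) as HP'.
  destruct HP' as [eps He].
  destruct (H eps (cond_pos eps)) as [del [Hdel Hd]].
  unfold filtermap, locally', within.
  apply (locally_le_locally_norm (V:=C_NormedModule)). exists (mkposreal del Hdel). intros s Hs Hsz.
  apply He. apply Hd; auto.
Qed.

Lemma qpoch_nz q (al : C) n : (0 < q)%R -> (q < 1)%R -> (Cmod al < 1)%R -> qpoch q al n <> 0.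
Proof.
  intros H0 H1 Ha. induction n as [|n IH]; simpl.
  - apply C1_nz.
  - apply Cmult_neq_0; auto. intros Hz.
    assert (E : al * RtoC q ^ n = 1) by (apply (f_equal (fun w => 1 - w)) in Hz; ring_simplify in Hz; auto;
      rewrite <- Hz; ring).
    apply (f_equal Cmod) in E. rewrite Cmod_mult, Cmod_pow, Cmod_R, Rabs_pos_eq, Cmod_1 in E by lra.
    assert (q ^ n <= 1)%R by (rewrite <- (pow1 n); apply pow_incr; lra).
    pose proof (Cmod_ge_0 al). pose proof (pow_le q n ltac:(lra)). nra.
Qed.

Lemma limC_unique (s : nat -> C) (l1 l2 : C) :
  filterlim s eventually (locally l1) -> filterlim s eventually (locally l2) -> l1 = l2.
Proof.
  intros H1 H2.
  enough (Hz : l1 - l2 = 0) by (replace l1 with ((l1 - l2) + l2) by ring; rewrite Hz; ring).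
  apply Cmod_eq_0. apply Rle_antisym; [|apply Cmod_ge_0].
  apply Rnot_lt_le; intros Hc.
  rewrite limC_eps in H1, H2.
  destruct (H1 (Cmod (l1 - l2) / 2)%R) as [N1 HN1]; [lra|].
  destruct (H2 (Cmod (l1 - l2) / 2)%R) as [N2 HN2]; [lra|].
  specialize (HN1 (max N1 N2) ltac:(lia)). specialize (HN2 (max N1 N2) ltac:(lia)).
  assert (Cmod (l1 - l2) <= Cmod (s (max N1 N2) - l2) + Cmod (s (max N1 N2) - l1))%R.
  { replace (l1 - l2) with ((s (max N1 N2) - l2) - (s (max N1 N2) - l1)) by ring.
    apply Cmod_sub_le. }
  lra.
Qed.

Lemma Cminus_eq0 (x y : C) : x - y = 0 -> x = y.
Proof. intros H. replace x with ((x - y) + y) by ring. rewrite H; ring. Qed.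

Definition Lf (q : R) (d e : C) (n : nat) : C :=
  (1 - RtoC q ^ n) * (1 - d * RtoC q ^ (n - 1)) * (1 - e * RtoC q ^ (n - 1)).
Definition Rf (q : R) (a b c : C) (n : nat) : C :=
  (1 - a * RtoC q ^ n) * (1 - b * RtoC q ^ n) * (1 - c * RtoC q ^ n).

Lemma pow_swap (z : C) i j : (z ^ i) ^ j = (z ^ j) ^ i.
Proof. rewrite <- !Cpow_mult_r, Nat.mul_comm; auto. Qed.

Lemma Cmod_Q q : (0 < q)%R -> Cmod (RtoC q) = q.
Proof. intros; rewrite Cmod_R, Rabs_pos_eq; lra. Qed.

Lemma Cmod_Qn q n : (0 < q)%R -> (q < 1)%R -> (Cmod (RtoC q ^ n) <= 1)%R.
Proof. intros. rewrite Cmod_pow, Cmod_Q by auto. rewrite <- (pow1 n); apply pow_incr; lra. Qed.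

Lemma Cmod_1m z : (Cmod z <= 1)%R -> (Cmod (1 - z) <= 2)%R.
Proof. intros. eapply Rle_trans; [apply Cmod_sub_le|]. rewrite Cmod_1; lra. Qed.

Lemma Cmod_mul1 z w : (Cmod z <= 1)%R -> (Cmod w <= 1)%R -> (Cmod (z * w) <= 1)%R.
Proof. intros. rewrite Cmod_mult. pose proof (Cmod_ge_0 z). pose proof (Cmod_ge_0 w). nra. Qed.

Lemma Cmod_prod3 z1 z2 z3 : (Cmod z1 <= 2)%R -> (Cmod z2 <= 2)%R -> (Cmod z3 <= 2)%R ->
  (Cmod (z1 * z2 * z3) <= 8)%R.
Proof.
  intros. rewrite !Cmod_mult. pose proof (Cmod_ge_0 z1). pose proof (Cmod_ge_0 z2). pose proof (Cmod_ge_0 z3).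
  assert (Cmod z1 * Cmod z2 <= 4)%R by nra. assert (0 <= Cmod z1 * Cmod z2)%R by nra. nra.
Qed.

Lemma Lf_bound q d e n : (0 < q)%R -> (q < 1)%R -> (Cmod d <= 1)%R -> (Cmod e <= 1)%R ->
  (Cmod (Lf q d e n) <= 8)%R.
Proof.
  intros. unfold Lf. pose proof (Cmod_Qn q n). pose proof (Cmod_Qn q (n - 1)).
  apply Cmod_prod3; apply Cmod_1m; auto; apply Cmod_mul1; auto.
Qed.

Lemma Rf_bound q a b c n : (0 < q)%R -> (q < 1)%R -> (Cmod a <= 1)%R -> (Cmod b <= 1)%R ->
  (Cmod c <= 1)%R -> (Cmod (Rf q a b c n) <= 8)%R.
Proof.
  intros. unfold Rf. pose proof (Cmod_Qn q n).
  apply Cmod_prod3; apply Cmod_1m; auto; apply Cmod_mul1; auto.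
Qed.

Definition EqProp (q : R) (f : C -> C -> C -> C -> C -> C -> C -> C) (delta : R) :=
     forall a b c d e x y : C,
       (Cmod a < delta)%R -> (Cmod b < delta)%R -> (Cmod c < delta)%R ->
       (Cmod d < delta)%R -> (Cmod e < delta)%R -> (Cmod x < delta)%R ->
       (Cmod y < delta)%R ->
       let F := f a b c d e in
       x * ((F x y - F x (y * RtoC q))
            - (d + e) / RtoC q * (F x (y * RtoC q) - F x (y * RtoC q ^ 2))
            + d * e / (RtoC q ^ 2) * (F x (y * RtoC q ^ 2) - F x (y * RtoC q ^ 3)))
       = y * ((F x y - F (x * RtoC q) y)
              - (a + b + c) * (F x (y * RtoC q) - F (x * RtoC q) (y * RtoC q))
              + (a * b + a * c + b * c)
                  * (F x (y * RtoC q ^ 2) - F (x * RtoC q) (y * RtoC q ^ 2))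
              - a * b * c
                  * (F x (y * RtoC q ^ 3) - F (x * RtoC q) (y * RtoC q ^ 3))).

Lemma recursion cf r M f q rho : (0 < q)%R -> (q < 1)%R -> (0 < r)%R ->
  (forall N, cube_sum7R N (W7 cf r) <= M)%R -> HCprop cf r f ->
  (0 < rho)%R -> (rho <= r)%R -> (rho <= 1)%R -> EqProp q f rho ->
  forall a b c d e t, (Cmod a < rho)%R -> (Cmod b < rho)%R -> (Cmod c < rho)%R ->
  (Cmod d < rho)%R -> (Cmod e < rho)%R -> (Cmod t < rho)%R ->
  forall n, t * Acoef cf a b c d e t (S n) * Lf q d e (S n) =
    (Acoef cf a b c d e t n - Acoef cf a b c d e (t * RtoC q) n) * Rf q a b c n.
Proof.
  intros hq0 hq1 Hr HB HC Hrho Hrr Hr1 HE a b c d e t Ha Hb Hc Hd He Ht n.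
  set (Q := RtoC q).
  assert (HQ : Q <> 0).
  { unfold Q. intros Hz. apply (f_equal Cmod) in Hz. rewrite Cmod_Q, Cmod_0 in Hz; lra. }
  assert (HQm : forall j (z : C), (Cmod (z * Q ^ j) <= Cmod z)%R).
  { intros j z. rewrite Cmod_mult. pose proof (Cmod_Qn q j hq0 hq1). pose proof (Cmod_ge_0 z).
    pose proof (Cmod_ge_0 (Q ^ j)). unfold Q. nra. }
  assert (HtQ : (Cmod (t * Q) < rho)%R).
  { pose proof (HQm 1%nat t). rewrite Cpow_1_r in H. lra. }
  set (A := fun (x : C) m => Acoef cf a b c d e x m).
  set (en := fun m => match m with
     | O => t * A t O * Lf q d e O
     | S m => t * A t (S m) * Lf q d e (S m) - (A t m - A (t * Q) m) * Rf q a b c m end).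
  assert (Hen : forall m, en m = 0).
  { apply (coef_unique en (8 * M + 16 * M * r) r rho Hr Hrho).
    -
      assert (HAb : forall x m, (Cmod x < rho)%R -> (Cmod (A x m) * r ^ m <= M)%R).
      { intros x m Hx. apply (A_lim cf r M a b c d e x m); auto; lra. }
      assert (HM : (0 <= M)%R).
      { pose proof (HAb t 0%nat Ht). pose proof (Cmod_ge_0 (A t 0%nat)). simpl in H. lra. }
      assert (HL : forall m, (Cmod (Lf q d e m) <= 8)%R) by (intros; apply Lf_bound; auto; lra).
      assert (HR : forall m, (Cmod (Rf q a b c m) <= 8)%R) by (intros; apply Rf_bound; auto; lra).
      assert (Hlin : forall m, (Cmod (t * A t m * Lf q d e m) * r ^ m <= 8 * M)%R).
      { intros m. rewrite !Cmod_mult. specialize (HL m). specialize (HAb t m Ht).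
        pose proof (Cmod_ge_0 t). pose proof (Cmod_ge_0 (A t m)). pose proof (Cmod_ge_0 (Lf q d e m)).
        assert (0 < r ^ m)%R by (apply pow_lt; lra).
        assert (Cmod t <= 1)%R by lra.
        assert (Cmod t * Cmod (A t m) * r ^ m <= M)%R by nra.
        assert (0 <= Cmod t * Cmod (A t m) * r ^ m)%R by (apply Rmult_le_pos; [apply Rmult_le_pos|]; lra).
        nra. }
      intros [|m]; simpl en.
      + pose proof (Hlin 0%nat). assert (0 <= 16 * M * r)%R by (apply Rmult_le_pos; lra). lra.
      + eapply Rle_trans; [apply Rmult_le_compat_r; [apply pow_le; lra|apply Cmod_sub_le]|].
        rewrite Rmult_plus_distr_r. apply Rplus_le_compat; [apply Hlin|].
        rewrite Cmod_mult. simpl pow.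
        pose proof (HAb t m Ht). pose proof (HAb (t * Q) m HtQ).
        pose proof (Cmod_sub_le (A t m) (A (t * Q) m)).
        pose proof (HR m). pose proof (Cmod_ge_0 (Rf q a b c m)).
        pose proof (Cmod_ge_0 (A t m - A (t * Q) m)).
        assert (0 < r ^ m)%R by (apply pow_lt; lra).
        assert (Cmod (A t m - A (t * Q) m)%C * r ^ m <= 2 * M)%R by nra.
        assert (0 <= Cmod (A t m - A (t * Q) m)%C * r ^ m)%R by nra.
        replace (Cmod (A t m - A (t * Q) m)%C * Cmod (Rf q a b c m) * (r * r ^ m))%R
          with ((Cmod (A t m - A (t * Q) m)%C * r ^ m) * Cmod (Rf q a b c m) * r)%R by ring.
        replace (16 * M * r)%R with (2 * M * 8 * r)%R by ring.
        apply Rmult_le_compat_r; [lra|]. apply mul_le'; lra.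
    -
      intros y Hy.
      assert (Ex : forall x z, (Cmod x < rho)%R -> (Cmod z < rho)%R ->
                isC (fun m => A x m * z ^ m) (f a b c d e x z)).
      { intros x z Hx Hz. apply (expansion cf r M f Hr HB HC); lra. }
      assert (Hy1 : (Cmod (y * Q) < rho)%R) by (pose proof (HQm 1%nat y); rewrite Cpow_1_r in H; lra).
      assert (Hy2 : (Cmod (y * Q ^ 2) < rho)%R) by (pose proof (HQm 2%nat y); lra).
      assert (Hy3 : (Cmod (y * Q ^ 3) < rho)%R) by (pose proof (HQm 3%nat y); lra).
      pose proof (Ex t y Ht Hy) as S0. pose proof (Ex t _ Ht Hy1) as S1.
      pose proof (Ex t _ Ht Hy2) as S2. pose proof (Ex t _ Ht Hy3) as S3.
      pose proof (Ex _ y HtQ Hy) as T0. pose proof (Ex _ _ HtQ Hy1) as T1.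
      pose proof (Ex _ _ HtQ Hy2) as T2. pose proof (Ex _ _ HtQ Hy3) as T3.
      pose proof (isC_scal _ _ t (isC_plus _ _ _ _ (isC_minus _ _ _ _ (isC_minus _ _ _ _ S0 S1)
          (isC_scal _ _ ((d + e) / Q) (isC_minus _ _ _ _ S1 S2)))
          (isC_scal _ _ (d * e / Q ^ 2) (isC_minus _ _ _ _ S2 S3)))) as LHS.
      pose proof (isC_shift _ _ (isC_scal _ _ y (isC_minus _ _ _ _ (isC_plus _ _ _ _
          (isC_minus _ _ _ _ (isC_minus _ _ _ _ S0 T0)
             (isC_scal _ _ (a + b + c) (isC_minus _ _ _ _ S1 T1)))
          (isC_scal _ _ (a * b + a * c + b * c) (isC_minus _ _ _ _ S2 T2)))
          (isC_scal _ _ (a * b * c) (isC_minus _ _ _ _ S3 T3))))) as RHS.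
      pose proof (isC_minus _ _ _ _ LHS RHS) as Tot.
      pose proof (HE a b c d e t y Ha Hb Hc Hd He Ht Hy) as Heq0. cbv zeta in Heq0.
      apply (isC_eq _ _ 0) in Tot; [|fold Q in Heq0; rewrite Heq0; ring].
      revert Tot. apply isC_ext. intros m. unfold en. clear -HQ. unfold Q in *.
      destruct m as [|k].
      + simpl shift. unfold Lf. cbn [Cpow Nat.sub]. field. auto.
      + simpl shift. unfold Lf, Rf. replace (S k - 1)%nat with k by lia.
        rewrite !Cpow_mult_l.
        rewrite (pow_swap (RtoC q) 2 (S k)), (pow_swap (RtoC q) 3 (S k)).
        rewrite !Cpow_1_l.
        rewrite (Cpow_S y k), (Cpow_S (RtoC q) k).
        field. auto.
  }
  specialize (Hen (S n)). apply Cminus_eq0. exact Hen.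
Qed.

Lemma Cdiv_nz (x y : C) : x <> 0 -> y <> 0 -> x / y <> 0.
Proof. intros Hx Hy H. apply Hx. replace x with (x / y * y) by (field; auto). rewrite H; ring. Qed.

Lemma Cmult_reg_r (x y z : C) : z <> 0 -> x * z = y * z -> x = y.
Proof. intros Hz H. replace x with (x * z / z) by (field; auto). rewrite H. field; auto. Qed.

Lemma fac_nz_r (x y : C) : x * y <> 0 -> y <> 0.
Proof. intros H Hy; apply H; rewrite Hy; ring. Qed.
Lemma fac_nz_l (x y : C) : x * y <> 0 -> x <> 0.
Proof. intros H Hy; apply H; rewrite Hy; ring. Qed.

Lemma Tcoef_nz q a b c d e n : (0 < q)%R -> (q < 1)%R -> (Cmod a < 1)%R -> (Cmod b < 1)%R ->
  (Cmod c < 1)%R -> (Cmod d < 1)%R -> (Cmod e < 1)%R -> Tcoef q a b c d e n <> 0.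
Proof.
  intros. unfold Tcoef. apply Cdiv_nz; repeat apply Cmult_neq_0; apply qpoch_nz; auto.
  rewrite Cmod_Q; auto.
Qed.

Lemma Tcoef_S q a b c d e n : (0 < q)%R -> (q < 1)%R ->
  (Cmod d < 1)%R -> (Cmod e < 1)%R ->
  Tcoef q a b c d e (S n) * Lf q d e (S n) = Tcoef q a b c d e n * Rf q a b c n.
Proof.
  intros hq0 hq1 Hd He.
  pose proof (qpoch_nz q (RtoC q) (S n) hq0 hq1 ltac:(rewrite Cmod_Q; auto)) as H1.
  pose proof (qpoch_nz q d (S n) hq0 hq1 Hd) as H2.
  pose proof (qpoch_nz q e (S n) hq0 hq1 He) as H3.
  simpl in H1, H2, H3.
  pose proof (fac_nz_l _ _ H1). pose proof (fac_nz_r _ _ H1).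
  pose proof (fac_nz_l _ _ H2). pose proof (fac_nz_r _ _ H2).
  pose proof (fac_nz_l _ _ H3). pose proof (fac_nz_r _ _ H3).
  unfold Tcoef, Lf, Rf. simpl qpoch. replace (S n - 1)%nat with n by lia.
  rewrite (Cpow_S (RtoC q) n) in *.
  field. repeat split; auto.
Qed.

Lemma Dq_nz q h (s : C) : s <> 0 -> Dq q h s = (h s - h (s * RtoC q)) / s.
Proof.
  intros Hs. unfold Dq. destruct (ClassicalEpsilon.excluded_middle_informative (s = 0)); [contradiction|reflexivity].
Qed.

Lemma Dq_0 q h : Dq q h 0 = climit (fun t => (h t - h (t * RtoC q)) / t) 0.
Proof.
  unfold Dq. destruct (ClassicalEpsilon.excluded_middle_informative (RtoC 0 = 0)); [reflexivity|].
  exfalso; auto.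
Qed.

Lemma one_minus_nz (z : C) : (Cmod z < 1)%R -> 1 - z <> 0.
Proof. intros H Hz. assert (z = 1) by (apply Cminus_eq0 in Hz; auto). subst. rewrite Cmod_1 in H; lra. Qed.

Theorem theorem2 (q : R) (hq0 : (0 < q)%R) (hq1 : (q < 1)%R)
  (f : C -> C -> C -> C -> C -> C -> C -> C)
  (Hf : analytic_at_origin7 f)
  (Heq : exists delta : R, (0 < delta)%R /\
     forall a b c d e x y : C,
       (Cmod a < delta)%R -> (Cmod b < delta)%R -> (Cmod c < delta)%R ->
       (Cmod d < delta)%R -> (Cmod e < delta)%R -> (Cmod x < delta)%R ->
       (Cmod y < delta)%R ->
       let F := f a b c d e in
       x * ((F x y - F x (y * RtoC q))
            - (d + e) / RtoC q * (F x (y * RtoC q) - F x (y * RtoC q ^ 2))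
            + d * e / (RtoC q ^ 2) * (F x (y * RtoC q ^ 2) - F x (y * RtoC q ^ 3)))
       = y * ((F x y - F (x * RtoC q) y)
              - (a + b + c) * (F x (y * RtoC q) - F (x * RtoC q) (y * RtoC q))
              + (a * b + a * c + b * c)
                  * (F x (y * RtoC q ^ 2) - F (x * RtoC q) (y * RtoC q ^ 2))
              - a * b * c
                  * (F x (y * RtoC q ^ 3) - F (x * RtoC q) (y * RtoC q ^ 3)))) :
  exists delta : R, (0 < delta)%R /\
    forall a b c d e x y : C,
      (Cmod a < delta)%R -> (Cmod b < delta)%R -> (Cmod c < delta)%R ->
      (Cmod d < delta)%R -> (Cmod e < delta)%R -> (Cmod x < delta)%R ->
      (Cmod y < delta)%R ->
      filterlim
        (fun N : nat => sum_n (fun n : nat =>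
            Tcoef q a b c d e n * y ^ n
            * Dqn q n (fun t => f a b c d e t 0) x) N)
        eventually (locally (f a b c d e x y)).
Proof.
  destruct Hf as (cf & r & M & Hr & HB & HC).
  destruct Heq as (dH & HdH & HE).
  set (rho := Rmin dH (Rmin r 1)).
  assert (Hrho : (0 < rho)%R) by (unfold rho; repeat apply Rmin_pos; lra).
  assert (H1 : (rho <= dH)%R) by (unfold rho; apply Rmin_l).
  assert (H2 : (rho <= r)%R) by (unfold rho; eapply Rle_trans; [apply Rmin_r|apply Rmin_l]).
  assert (H3 : (rho <= 1)%R) by (unfold rho; eapply Rle_trans; [apply Rmin_r|apply Rmin_r]).
  assert (HE' : EqProp q f rho) by (unfold EqProp; intros; apply HE; lra).
  assert (HB' : forall N, (cube_sum7R N (W7 cf r) <= M)%R) by exact HB.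
  assert (HC' : HCprop cf r f) by exact HC.
  exists rho. split; auto.
  intros a b c d e x y Ha Hb Hc Hd He Hx Hy.
  set (g := fun t => f a b c d e t 0).
  assert (HM : (0 <= M)%R).
  { assert (H0 : (Cmod 0 <= r)%R) by (rewrite Cmod_0; lra).
    destruct (A_lim cf r M 0 0 0 0 0 0 0 Hr HB' H0 H0 H0 H0 H0 H0) as [_ HA].
    pose proof (Cmod_ge_0 (Acoef cf 0 0 0 0 0 0 0)). simpl in HA. lra. }
  assert (Hclaim : forall n t, (Cmod t < rho)%R ->
    Acoef cf a b c d e t n = Tcoef q a b c d e n * Dqn q n g t).
  { induction n as [|n IH]; intros t Ht.
    - assert (Ht0 : (Cmod 0 < r)%R) by (rewrite Cmod_0; lra).
      pose proof (expansion cf r M f Hr HB' HC' a b c d e t 0 ltac:(lra) ltac:(lra) ltac:(lra)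
        ltac:(lra) ltac:(lra) ltac:(lra) Ht0) as Hexp.
      assert (Hconst : isC (fun m => Acoef cf a b c d e t m * 0 ^ m) (Acoef cf a b c d e t 0)).
      { unfold isC. eapply filterlim_ext; [|apply limC_const]. intros L; simpl.
        induction L as [|L IHL]; [rewrite sumC_O; simpl; ring|].
        rewrite sumC_S, <- IHL; simpl; ring. }
      pose proof (limC_unique _ _ _ Hconst Hexp) as Heq0.
      rewrite Heq0. change (Dqn q 0 g t) with (g t). unfold g. unfold Tcoef; cbn [qpoch]. field.
    - set (h := Dqn q n g).
      set (T' := Tcoef q a b c d e (S n)).
      assert (Hd1 : (Cmod d < 1)%R) by lra. assert (He1 : (Cmod e < 1)%R) by lra.
      assert (HTS : T' * Lf q d e (S n) = Tcoef q a b c d e n * Rf q a b c n)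
        by (apply Tcoef_S; auto).
      assert (HT'nz : T' <> 0) by (apply Tcoef_nz; auto; lra).
      assert (HLnz : Lf q d e (S n) <> 0).
      { unfold Lf. replace (S n - 1)%nat with n by lia.
        assert (Hqn : (Cmod (RtoC q ^ n) <= 1)%R) by (apply Cmod_Qn; auto).
        repeat apply Cmult_neq_0; apply one_minus_nz.
        - rewrite Cpow_S, Cmod_mult, Cmod_Q by auto. pose proof (Cmod_ge_0 (RtoC q ^ n)). nra.
        - rewrite Cmod_mult. pose proof (Cmod_ge_0 (RtoC q ^ n)). pose proof (Cmod_ge_0 d). nra.
        - rewrite Cmod_mult. pose proof (Cmod_ge_0 (RtoC q ^ n)). pose proof (Cmod_ge_0 e). nra. }
      assert (HQm : forall s : C, (Cmod (s * RtoC q) <= Cmod s)%R).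
      { intros s. rewrite Cmod_mult, Cmod_Q by auto. pose proof (Cmod_ge_0 s). nra. }
      assert (Hnz : forall s, (Cmod s < rho)%R -> s <> 0 ->
                Acoef cf a b c d e s (S n) = T' * ((h s - h (s * RtoC q)) / s)).
      { intros s Hs Hs0.
        pose proof (recursion cf r M f q rho hq0 hq1 Hr HB' HC' Hrho H2 H3 HE'
          a b c d e s ltac:(lra) ltac:(lra) ltac:(lra) ltac:(lra) ltac:(lra) Hs n) as Hrec.
        rewrite (IH s Hs), (IH (s * RtoC q)) in Hrec by (pose proof (HQm s); lra).
        apply (Cmult_reg_r _ _ (s * Lf q d e (S n))); [apply Cmult_neq_0; auto|].
        transitivity ((Tcoef q a b c d e n * h s - Tcoef q a b c d e n * h (s * RtoC q)) * Rf q a b c n).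
        { unfold h; rewrite <- Hrec; ring. }
        replace (T' * ((h s - h (s * RtoC q)) / s) * (s * Lf q d e (S n)))
          with ((T' * Lf q d e (S n)) * (h s - h (s * RtoC q))) by (field; auto).
        rewrite HTS. ring. }
      change (Dqn q (S n) g t) with (Dq q h t).
      destruct (Ceq_dec t 0) as [Ht0|Ht0].
      + subst t. rewrite Dq_0.
        rewrite (climit_eq _ _ (Acoef cf a b c d e 0 (S n) / T')); [field; auto|].
        apply limf_eps. intros eps Heps.
        assert (HT'm : (0 < Cmod T')%R) by (apply Cmod_gt_0; auto).
        assert (Hrn : (0 < r ^ S n)%R) by (apply pow_lt; lra).
        set (K0 := (M / r ^ S n / r / Cmod T')%R).
        assert (HK0 : (0 <= K0)%R).
        { unfold K0. repeat apply Rdiv_le_0_compat; lra. }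
        exists (Rmin rho (eps / (K0 + 1))). split.
        { apply Rmin_pos; [lra|apply Rdiv_lt_0_compat; lra]. }
        intros s Hs Hs0. replace (s - 0) with s in Hs by ring.
        assert (Hs1 : (Cmod s < rho)%R) by (eapply Rlt_le_trans; [exact Hs|apply Rmin_l]).
        assert (Hs2 : (Cmod s < eps / (K0 + 1))%R) by (eapply Rlt_le_trans; [exact Hs|apply Rmin_r]).
        replace ((h s - h (s * RtoC q)) / s - Acoef cf a b c d e 0 (S n) / T')
          with ((Acoef cf a b c d e s (S n) - Acoef cf a b c d e 0 (S n)) / T').
        2:{ rewrite (Hnz s Hs1 Hs0). field. auto. }
        rewrite Cmod_div by auto.
        pose proof (A_cont cf r M a b c d e s (S n) Hr HB' ltac:(lra) ltac:(lra) ltac:(lra)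
          ltac:(lra) ltac:(lra) ltac:(lra)) as Hcont.
        assert (Hbd : (Cmod (Acoef cf a b c d e s (S n) - Acoef cf a b c d e 0 (S n))%C / Cmod T'
                  <= Cmod s * K0)%R).
        { apply Rle_div_l; auto. eapply Rle_trans; [exact Hcont|]. right. unfold K0. field.
          repeat split; lra. }
        eapply Rle_lt_trans; [exact Hbd|].
        apply Rlt_div_r in Hs2; [|lra]. pose proof (Cmod_ge_0 s). nra.
      + rewrite Dq_nz by auto. apply Hnz; auto. }
  eapply filterlim_ext; [|apply (expansion cf r M f Hr HB' HC' a b c d e x y); lra].
  intros L. simpl. apply sum_n_ext. intros n. rewrite Hclaim by lra.
  match goal with |- ?u = ?v => change (@eq C u v) end; ring.
Qed.
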